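(* Let $a_1,a_2,\dots$ be positive integers. For all $n\ge 2$, $Q_n(x)=p_n(x,x+1)$.
   Context: Fix positive integers $a_1,a_2,\dots$. Define polynomials $Q_n(x)\in\mathbb{Z}[x]$ by $Q_0(x)=1$, $Q_1(x)=x+a_1$, and $Q_n(x)=(-1)^{n+1}a_nQ_{n-1}(x)+x(x+1)Q_{n-2}(x)$ for $n\ge 2$. Equivalently, $Q_n(x)$ is the determinant of the $n\times n$ tridiagonal matrix $M_n=(m_{ij})$ defined by: - $m_{11}=x+a_1$ and $m_{kk}=(-1)^{k+1}a_k$ for $k\ge 2$; - $m_{i,i+1}=-(x+1)$ for odd $i$ and $m_{i,i+1}=-x$ for even $i$; - $m_{i,i-1}=x$ for even $i$ and $m_{i,i-1}=x+1$ for odd $i\ge3$; - all other entries $0$. For $n\ge1$, $1\le l\le n$, let $I_{n,l}$ be the set of strictly increasing sequences $(t_1,\dots,t_l)$ in $\{1,\dots,n\}$ with $t_i\equiv n+i-l\pmod 2$ for all $i$. Let $a_{\mathbf t}=a_{t_1}\cdots a_{t_l}$ and $\gamma_n(l)=\sum_{\mathbf t\in I_{n,l}}a_{\mathbf t}$, with $\gamma_n(0)=1$. For $n\ge2$ write $n=2m+r_0$ with $r_0\in\{0,1\}$ and $r_1=1-r_0$, and define $$p_n(x,y)=x^{r_0}\sum_{k=0}^{m}(-1)^{m-k}x^ky^k\gamma_n(n-2k-r_0)+x^{r_1}\sum_{k=0}^{m-r_1}(-1)^{m-k}x^ky^k\gamma_n(n-2k-r_1).$$ *)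

(* Defs.v *)
From HB Require Import structures.
From mathcomp Require Import all_boot all_order all_algebra.
Set Implicit Arguments. Unset Strict Implicit. Unset Printing Implicit Defensive.
Import Order.TTheory GRing.Theory Num.Theory.
Local Open Scope ring_scope.

(* The sequence a_1, a_2, ... is a : nat -> nat; a 0 is unused. *)

(* Qpair a n = (Q_n, Q_{n+1}) *)
Fixpoint Qpair (a : nat -> nat) (n : nat) : {poly int} * {poly int} :=
  match n with
  | 0%N => (1, 'X + (a 1%N)%:Z%:P)
  | k.+1 => let (q0, q1) := Qpair a k in
            (q1, (-1) ^+ (k.+2.+1) * (a k.+2)%:Z%:P * q1 + 'X * ('X + 1) * q0)
  end.

Definition Q (a : nat -> nat) (n : nat) : {poly int} := (Qpair a n).1.

(* A tuple entry j : 'I_n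
   encodes the value j+1; the position i : 'I_l encodes the index i+1. *)
Definition gamma (a : nat -> nat) (n l : nat) : int :=
  \sum_(t : l.-tuple 'I_n |
          sorted ltn (map (fun j : 'I_n => (val j).+1) t) &&
          [forall i : 'I_l, ((val (tnth t i)).+1 == (n + i.+1 - l)%N %[mod 2])%N])
     \prod_(i < l) (a (val (tnth t i)).+1)%:Z.

Definition p (R : comRingType) (a : nat -> nat) (n : nat) (x y : R) : R :=
  let r0 := odd n in
  let r1 := (1 - r0)%N in
  let m := n./2 in
  x ^+ r0 * \sum_(k < m.+1)
      (-1) ^+ (m - k)%N * x ^+ k * y ^+ k * (gamma a n (n - 2 * k - r0)%N)%:~R
  + x ^+ r1 * \sum_(k < (m - r1).+1)
      (-1) ^+ (m - k)%N * x ^+ k * y ^+ k * (gamma a n (n - 2 * k - r1)%N)%:~R.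

(* Main.v *)
Require Import Defs.
From HB Require Import structures.
From mathcomp Require Import all_boot all_order all_algebra.
From mathcomp Require Import zify ring.
Import GRing.Theory.
Local Open Scope ring_scope.
Set Implicit Arguments. Unset Strict Implicit. Unset Printing Implicit Defensive.

Definition wt (a : nat -> nat) (s : seq nat) : int := \prod_(v <- s) (a v.+1)%:Z.
Definition SS (a : nat -> nat) N l (P : pred (seq nat)) : int :=
  \sum_(t : l.-tuple 'I_N | P (map val t)) wt a (map val t).
Definition parg (N k : nat) (s : seq nat) :=
  all (fun i => odd (nth 0%N s i + k) == odd (N + i)) (iota 0 (size s)).
Definition good N s := sorted ltn s && parg N (size s) s.

Lemma pathS x s : path ltn x.+1 (map succn s) = path ltn x s.
Proof. by elim: s x => //= y s IH x; rewrite IH ltnS. Qed.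

Lemma sortedS s : sorted ltn (map succn s) = sorted ltn s.
Proof. by case: s => //= x s; rewrite pathS. Qed.

Lemma size_sorted N s : sorted ltn s -> all (fun v => v < N)%N s -> (size s <= N)%N.
Proof.
move=> hs ha; have u := sorted_uniq ltn_trans ltnn hs.
rewrite -(size_iota 0 N); apply: uniq_leq_size => // x hx.
by rewrite mem_iota /= (allP ha x hx).
Qed.

Lemma all_tuple N l (t : l.-tuple 'I_N) : all (fun v => v < N)%N (map val t).
Proof. apply/allP => x /mapP [i _ ->] /=; exact: ltn_ord. Qed.

Lemma odd_eq (x y : nat) : (x %% 2 = y %% 2)%N -> odd x = odd y.
Proof. by rewrite !modn2; case: odd; case: odd. Qed.

Lemma par_conv (N l i v : nat) : (i < l)%N -> (l <= N)%N ->
  (v.+1 == N + i.+1 - l %[mod 2])%N = (odd (v + l) == odd (N + i)).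
Proof.
move=> h1 h2; apply/idP/idP => /eqP H; apply/eqP.
- apply: odd_eq; lia.
- have : ((v + l) %% 2 = (N + i) %% 2)%N.
    by rewrite !modn2 H.
  lia.
Qed.

Lemma gammaE a N l : gamma a N l = SS a N l (good N).
Proof.
rewrite /gamma /SS; apply: eq_big => t.
- have -> : [seq (val j).+1 | j <- t] = map succn (map val t) by rewrite -map_comp.
  rewrite sortedS /good; case Hs: (sorted ltn _) => //=.
  have hsz : size (map val t) = l by rewrite size_map size_tuple.
  have hle : (l <= N)%N by rewrite -hsz; apply: size_sorted => //; apply: all_tuple.
  rewrite /parg hsz; apply/forallP/allP => H i.
  + rewrite mem_iota add0n => /andP [_ hi].
    have := H (Ordinal hi); rewrite par_conv //.
    by rewrite (tnth_nth (tnth t (Ordinal hi))) /= (nth_map (tnth t (Ordinal hi))) ?size_tuple.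
  + have := H i; rewrite mem_iota add0n ltn_ord => /(_ isT).
    rewrite par_conv //.
    by rewrite (tnth_nth (tnth t i)) /= (nth_map (tnth t i)) ?size_tuple.
- move=> _; by rewrite /wt big_map big_tuple.
Qed.

Lemma SS_ext a N l (P P' : pred (seq nat)) :
  (forall t : l.-tuple 'I_N, P (map val t) = P' (map val t)) -> SS a N l P = SS a N l P'.
Proof. by move=> H; apply: eq_bigl => t; rewrite H. Qed.

Lemma SS0 a N (P : pred (seq nat)) : SS a N 0 P = if P [::] then 1 else 0.
Proof.
rewrite /SS big_mkcond /= (big_pred1 [tuple]) /=; last by move=> t; rewrite /= [t]tuple0; apply/esym/eqP.
by rewrite /wt big_nil.
Qed.

Lemma droplP N l (u : l.+1.-tuple 'I_N) : size (take l u) == l.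
Proof. by rewrite size_takel // size_tuple. Qed.
Definition dropl N l (u : l.+1.-tuple 'I_N) : l.-tuple 'I_N := Tuple (droplP u).

Lemma SSrcons a N l (x : nat) (hx : (x < N)%N) (P : pred (seq nat)) :
  \sum_(t : l.+1.-tuple 'I_N | P (map val t) && (last 0%N (map val t) == x)) wt a (map val t)
  = (a x.+1)%:Z * SS a N l (fun s => P (rcons s x)).
Proof.
rewrite /SS (reindex_onto (fun t : l.-tuple 'I_N => [tuple of rcons t (Ordinal hx)])
   (@dropl N l)) /=.
- rewrite mulr_sumr; apply: eq_big => t.
  + rewrite map_rcons last_rcons eqxx andbT /=.
    have -> : dropl [tuple of rcons t (Ordinal hx)] = t.
      by apply: val_inj => /=; rewrite -cats1 take_size_cat ?size_tuple.
    by rewrite eqxx andbT.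
  + by move=> _; rewrite map_rcons /wt big_rcons /= mulrC.
- move=> u /andP [_ hl]; apply: val_inj => /=.
  have : size u = l.+1 by rewrite size_tuple.
  move: hl; case/lastP: (val u) => [|s y] //.
  rewrite map_rcons last_rcons size_rcons => /eqP hy [hs].
  have -> : take l (rcons s y) = s by rewrite -cats1 take_size_cat.
  congr rcons; exact: val_inj.
Qed.

Lemma SSwiden a M N l (hMN : (M <= N)%N) (P : pred (seq nat)) :
  (forall t : l.-tuple 'I_N, P (map val t) -> all (fun v => v < M)%N (map val t)) ->
  SS a N l P = SS a M l P.
Proof.
move=> H; case: M hMN H => [|M] hMN H.
  case: l P H => [|l] P H; first by rewrite !SS0.
  rewrite /SS big_pred0; last first.
    move=> t; apply/negP => /H.
    have : size (map val t) = l.+1 by rewrite size_map size_tuple.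
    by case: (map val t) => [|y s] //= _ /andP [].
  rewrite big_pred0 // => t; case: (tnth t ord0) => m hm; exfalso; by rewrite ltn0 in hm.
rewrite /SS (reindex_onto (fun t : l.-tuple 'I_M.+1 => [tuple of map (widen_ord hMN) t])
   (fun u : l.-tuple 'I_N => [tuple of map (fun i : 'I_N => (inord (val i) : 'I_M.+1)) u])) /=.
- apply: eq_big => t.
  + have -> : map val (map (widen_ord hMN) t) = map val t by rewrite -map_comp.
    case: (P _) => //=; apply/eqP; apply: eq_from_tnth => i.
    by rewrite !tnth_map /= inord_val.
  + by move=> _; rewrite -map_comp.
- move=> u hu; apply: eq_from_tnth => i; rewrite !tnth_map; apply: val_inj => /=.
  rewrite inordK //; have := allP (H u hu) (val (tnth u i)).
  by apply; apply: map_f; apply: mem_tnth.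
Qed.

Lemma sorted_rcons s x : sorted ltn (rcons s x) = sorted ltn s && all (fun v => v < x)%N s.
Proof.
elim: s => //= y s IH.
rewrite !path_sortedE; last exact: ltn_trans; last exact: ltn_trans.
rewrite IH all_rcons.
by case: (all (ltn y) s); case: (sorted ltn s); case: (all (fun v => v < x)%N s); rewrite /= ?andbT ?andbF.
Qed.

Lemma parg_rcons N k s y :
  parg N k (rcons s y) = parg N k s && (odd (y + k) == odd (N + size s)).
Proof.
rewrite /parg size_rcons -addn1 iotaD all_cat /= add0n andbT.
rewrite nth_rcons ltnn eqxx; congr andb.
apply: eq_in_all => i; rewrite mem_iota add0n => /andP [_ hi].
by rewrite nth_rcons hi.
Qed.

Lemma parg_S N k s : parg N.+1 k.+1 s = parg N k s.
Proof.
apply: eq_all => i; rewrite addnS addSn /=.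
by case: (odd _); case: (odd _).
Qed.

Lemma parg_SS N k s : parg N.+2 k s = parg N k s.
Proof. by apply: eq_all => i; rewrite addSn addSn /= negbK. Qed.

Lemma good_rcons N s : good N.+1 (rcons s N) = good N s && all (fun v => v < N)%N s.
Proof.
rewrite /good sorted_rcons size_rcons parg_rcons parg_S addnS addSn eqxx andbT.
by case: (sorted _ s); case: (all _ s); case: (parg _ _ _).
Qed.

Lemma caseB n s : size s <> 0%N -> all (fun v => v < n.+1)%N s ->
  good n.+1 s && (last 0%N s != n) = good n.+1 s && all (fun v => v < n.-1)%N s.
Proof.
case/lastP: s => [//|s y] _; rewrite all_rcons last_rcons => /andP [hy _].
rewrite /good sorted_rcons size_rcons parg_rcons all_rcons.
case hs: (sorted ltn s); case ha: (all _ s); case hp: (parg _ _ _) => //=.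
case: eqP => hpar /=; last by [].
have hpar' : (y %% 2 = n %% 2)%N.
  move: hpar; rewrite addnS /= !oddD !modn2.
  by case: (odd y); case: (odd n); case: (odd (size s)).
have -> : (y != n) = (y < n.-1)%N by apply/idP/idP; lia.
case hyn: (y < n.-1)%N => //=; apply/esym/allP => v hv.
by apply: leq_trans hyn; apply: ltnW; apply: (allP ha).
Qed.

Lemma gammaS a n l : gamma a n.+1 l.+1 = (a n.+1)%:Z * gamma a n l + gamma a n.-1 l.+1.
Proof.
rewrite gammaE {1}/SS (bigID (fun t : l.+1.-tuple 'I_n.+1 => last 0%N (map val t) == n)) /=.
rewrite (@SSrcons a n.+1 l n (ltnSn n) (good n.+1)).
apply: (f_equal2 (fun x y : int => x + y)).
- apply: (f_equal2 (fun x y : int => x * y)) => //.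
  rewrite (@SS_ext a _ _ _ (fun s => good n s && all (fun v => v < n)%N s)); last first.
    by move=> t; exact: good_rcons.
  rewrite (@SSwiden a n n.+1 l (leqnSn n)); last by move=> t /andP [].
  by rewrite gammaE; apply: SS_ext => t; rewrite all_tuple andbT.
- transitivity (SS a n.+1 l.+1 (fun s => good n.+1 s && all (fun v => v < n.-1)%N s)).
    apply: eq_bigl => t; apply: caseB; last exact: all_tuple.
    by rewrite size_map size_tuple.
  rewrite (@SSwiden a n.-1 n.+1 l.+1); last by move=> t /andP [].
    2: by apply: leq_trans (leq_pred n) (leqnSn n).
  rewrite gammaE; apply: SS_ext => t; rewrite all_tuple andbT.
  case: n t => [|n] t; first by case: (tnth t ord0) => m hm; exfalso; rewrite ltn0 in hm.
  by rewrite /good /= parg_SS.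
Qed.

Lemma gamma0 a n : gamma a n 0 = 1.
Proof. by rewrite gammaE SS0. Qed.

Lemma gamma_big a n l : (n < l)%N -> gamma a n l = 0.
Proof.
move=> h; rewrite gammaE /SS big_pred0 // => t; apply/negP => /andP [hs _].
have := size_sorted hs (all_tuple t); rewrite size_map size_tuple; lia.
Qed.

Definition zz : {poly int} := 'X * ('X + 1).
Definition cf (n l : nat) : {poly int} :=
  (-1) ^+ (n./2 - (n - l)./2) * 'X ^+ (odd (n - l)) * zz ^+ ((n - l)./2).
Definition FF a n := \sum_(l < n.+1) cf n l * (gamma a n l)%:~R.

Lemma polyCz (x : int) : x%:P = x%:~R :> {poly int}.
Proof. by rewrite -{1}[x]intz rmorph_int. Qed.

Lemma sgn_par k1 k2 : odd k1 = odd k2 -> (-1) ^+ k1 = (-1) ^+ k2 :> {poly int}.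
Proof. by move=> h; rewrite -signr_odd h signr_odd. Qed.

Lemma cfA n i : (i <= n.+1)%N -> cf n.+2 i.+1 = (-1) ^+ n.+3 * cf n.+1 i.
Proof.
move=> h; rewrite /cf subSS !mulrA -exprD; congr (_ * _ * _).
apply: sgn_par; apply: odd_eq; rewrite -!divn2; lia.
Qed.

Lemma cfB n i : (i <= n)%N -> cf n.+2 i = zz * cf n i.
Proof.
move=> h; rewrite /cf.
have -> : (n.+2 - i = (n - i).+2)%N by lia.
rewrite /= negbK subSS exprS; ring.
Qed.

Lemma Qrec a n : Q a n.+2 =
  (-1) ^+ n.+3 * ((a n.+2)%:Z)%:P * Q a n.+1 + 'X * ('X + 1) * Q a n.
Proof.
have E k : Qpair a k.+1 = ((Qpair a k).2,
   (-1) ^+ (k.+3) * ((a k.+2)%:Z)%:P * (Qpair a k).2 + 'X * ('X + 1) * (Qpair a k).1).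
  by rewrite /=; case: (Qpair a k).
by rewrite /Q (E n.+1) (E n).
Qed.

Lemma FF_step a n : FF a n.+2 =
  (-1) ^+ n.+3 * ((a n.+2)%:Z)%:P * FF a n.+1 + 'X * ('X + 1) * FF a n.
Proof.
rewrite /FF big_ord_recl.
have -> : cf n.+2 ord0 * (gamma a n.+2 ord0)%:~R = cf n.+2 0 * (1 : int)%:~R by rewrite -(gamma0 a n.+2).
rewrite (eq_bigr (fun i : 'I_n.+2 => (-1) ^+ n.+3 * ((a n.+2)%:Z)%:P *
   (cf n.+1 i * (gamma a n.+1 i)%:~R) + cf n.+2 i.+1 * (gamma a n i.+1)%:~R)); last first.
  move=> i _; rewrite lift0 gammaS rmorphD rmorphM /= cfA; last by rewrite -ltnS.
  rewrite polyCz; ring.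
rewrite big_split /= -mulr_sumr.
have H : cf n.+2 0 * (1 : int)%:~R + \sum_(i < n.+2) cf n.+2 i.+1 * (gamma a n i.+1)%:~R
    = zz * \sum_(l < n.+1) cf n l * (gamma a n l)%:~R.
  transitivity (\sum_(l < n.+3) cf n.+2 l * (gamma a n l)%:~R).
    rewrite [RHS]big_ord_recl; congr (_ + _); first by rewrite -(gamma0 a n).
  rewrite 2!big_ord_recr /= !gamma_big // !mulr0 !addr0 mulr_sumr.
  by apply: eq_bigr => i _; rewrite cfB ?mulrA // -ltnS.
rewrite -/zz -H; ring.
Qed.

Lemma gamma11 a : gamma a 1 1 = (a 1)%:Z.
Proof. by rewrite gammaS /= gamma0 gamma_big // mulr1 addr0. Qed.

Lemma QF a n : Q a n = FF a n.
Proof.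
suff : Q a n = FF a n /\ Q a n.+1 = FF a n.+1 by case.
elim: n => [|n [IH1 IH2]].
  split.
    by rewrite /FF big_ord1 gamma0 /cf /= !mulr1.
  rewrite /FF big_ord_recr big_ord1 /= gamma0 gamma11 /cf /=.
  rewrite /Q /= polyCz; ring.
split => //; by rewrite Qrec FF_step IH1 IH2.
Qed.

Lemma sum_split (f : nat -> {poly int}) k :
  \sum_(l < k.*2) f l = \sum_(j < k) f (j.*2) + \sum_(j < k) f (j.*2).+1.
Proof.
elim: k => [|k IH]; first by rewrite !big_ord0 addr0.
by rewrite doubleS !big_ord_recr /= IH; ring.
Qed.

Lemma rev_sum (F : nat -> {poly int}) k :
  \sum_(i < k) F i = \sum_(j < k) F (k - j.+1)%N.
Proof. by rewrite -(big_mkord xpredT) big_rev_mkord subn0. Qed.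

Lemma pFF a n : (1 <= n)%N -> p a n 'X ('X + 1) = FF a n.
Proof.
move=> hn.
have [m H] : exists m, n = m.*2 \/ n = (m.*2).+1.
  exists n./2; have := odd_double_half n; case: (odd n) => /= h; [right | left]; by rewrite -[in LHS]h ?add0n ?add1n.
case: H hn => -> hn.
- have hm : (0 < m)%N by lia.
  rewrite /p /FF odd_double doubleK /= expr0 mul1r expr1 !subn0 subn1 (prednK hm).
  rewrite [RHS]big_ord_recr /= (sum_split (fun l => cf m.*2 l * (gamma a m.*2 l)%:~R)) addrAC.
  rewrite mulr_sumr.
  rewrite (rev_sum (fun k => (-1) ^+ (m - k) * 'X^k * ('X + 1) ^+ k *
     (gamma a m.*2 (m.*2 - 2 * k - 0))%:~R)).
  rewrite (rev_sum (fun k => 'X * ((-1) ^+ (m - k) * 'X^k * ('X + 1) ^+ k *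
     (gamma a m.*2 (m.*2 - 2 * k - 1))%:~R))).
  rewrite big_ord_recr /=.
  congr (_ + _ + _); try (apply: eq_bigr => j _; have hj := ltn_ord j); rewrite /cf /zz.
  + have -> : (m.+1 - j.+1 = m - j)%N by lia.
    have -> : (m.*2 - 2 * (m - j) - 0 = j.*2)%N by lia.
    have -> : (m - (m - j) = (m.*2)./2 - (m.*2 - j.*2)./2)%N by rewrite -!divn2; lia.
    have -> : (m.*2 - j.*2 = (m - j).*2)%N by lia.
    rewrite odd_double !doubleK /= expr0 exprMn; ring.
    have -> : (m.*2 - 2 * (m.+1 - m.+1) - 0 = m.*2)%N by lia.
    have -> : (m - (m.+1 - m.+1) = m.*2./2 - (m.*2 - m.*2)./2)%N by rewrite -!divn2; lia.
    rewrite !subnn /= !expr0; ring.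
  + have -> : (m.*2 - 2 * (m - j.+1) - 1 = (j.*2).+1)%N by lia.
    have -> : (m - (m - j.+1) = (m.*2)./2 - (m.*2 - (j.*2).+1)./2)%N by rewrite -!divn2; lia.
    have -> : (m.*2 - (j.*2).+1 = ((m - j.+1).*2).+1)%N by lia.
    rewrite /= odd_double uphalf_double /= expr1 exprMn; ring.
- rewrite /p /FF /= odd_double /= uphalf_double expr1 expr0 mul1r subn0.
  rewrite subnn -doubleS (sum_split (fun l => cf (m.*2).+1 l * (gamma a (m.*2).+1 l)%:~R)).
  rewrite mulr_sumr.
  rewrite (rev_sum (fun k => 'X * ((-1) ^+ (m - k) * 'X^k * ('X + 1) ^+ k *
     (gamma a (m.*2).+1 ((m.*2).+1 - 2 * k - 1))%:~R))).
  rewrite (rev_sum (fun k => (-1) ^+ (m - k) * 'X^k * ('X + 1) ^+ k *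
     (gamma a (m.*2).+1 ((m.*2).+1 - 2 * k - 0))%:~R)).
  congr (_ + _); apply: eq_bigr => j _; have hj := ltn_ord j; rewrite /cf /zz.
  + have -> : ((m.*2).+1 - 2 * (m.+1 - j.+1) - 1 = j.*2)%N by lia.
    have -> : (m - (m.+1 - j.+1) = ((m.*2).+1)./2 - ((m.*2).+1 - j.*2)./2)%N by rewrite -!divn2; lia.
    have -> : ((m.*2).+1 - j.*2 = ((m - j).*2).+1)%N by lia.
    rewrite /= odd_double !uphalf_double /= ?subSS expr1 exprMn; ring.
  + have -> : ((m.*2).+1 - 2 * (m.+1 - j.+1) - 0 = (j.*2).+1)%N by lia.
    have -> : (m - (m.+1 - j.+1) = ((m.*2).+1)./2 - ((m.*2).+1 - (j.*2).+1)./2)%N by rewrite -!divn2; lia.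
    have -> : ((m.*2).+1 - (j.*2).+1 = (m - j).*2)%N by lia.
    rewrite odd_double doubleK subSS exprMn; ring.
Qed.

Unset Implicit Arguments.

Theorem corollary1 (a : nat -> nat) (apos : forall i : nat, (0 < i)%N -> (0 < a i)%N)
  (n : nat) (hn : (2 <= n)%N) :
  Q a n = p a n 'X ('X + 1).
Proof. by rewrite QF pFF //; apply: leq_trans hn. Qed.
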